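(* There are constants $C\in(0,\infty)$, $c\in(0,1)$ and, for every $\epsilon>0$, an $N_\epsilon\in\mathbb N$ such that for all $N\ge N_\epsilon$, all $s\in(0,\infty)\cap\frac1{\log N}\mathbb N$ and all $t\in(0,1]\cap\frac1N\mathbb N$, $$\P\big(\tau^{(N)}_{s\log N}=tN\big)\le C\,\frac1N\,\frac st\,t^{(1-\epsilon)s}e^{-cs\log^+(cs)}.$$ Consequently there is $C'\in(0,\infty)$ such that for all $N$ large enough and such $s,t$: $\P(\tau^{(N)}_{s\log N}=tN)\le C'\frac1Nf_{cs}(t)$.
   Context: Positive reals $r(n)=\frac an(1+o(1))$, $a\in(0,\infty)$, $R_N=\sum_{n\le N}r(n)$; $(T^{(N)}_i)$ i.i.d. with $\P(T^{(N)}_i=n)=\frac{r(n)}{R_N}\mathbf1_{\{1,\dots,N\}}(n)$; $\tau^{(N)}_k=\sum_{i\le k}T^{(N)}_i$. $\log^+x=\max(\log x,0)$. $f_s$ is the density of $Y_s$, $Y$ the Dickman subordinator (Lévy measure $\frac1t\mathbf1_{(0,1)}(t)\mathrm dt$); on $(0,1]$, $f_s(t)=\frac{s\,t^{s-1}e^{-\gamma s}}{\Gamma(s+1)}$. *)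

(* Defs.v *)
From Stdlib Require Import Factorial Reals Lra ClassicalEpsilon.
Open Scope R_scope.

Fixpoint sumR (n : nat) (f : nat -> R) : R :=
  match n with
  | O => 0
  | S n' => sumR n' f + f n'
  end.

Definition RN (r : nat -> R) (N : nat) : R := sumR N (fun i => r (S i)).

(* P(T^(N) = n) = r(n)/R_N * 1_{1..N}(n) *)
Definition pT (r : nat -> R) (N n : nat) : R :=
  if (Nat.leb 1 n && Nat.leb n N)%bool then r n / RN r N else 0.

(* Law of tau^(N)_k = T_1 + ... + T_k for i.i.d. T_i ~ pT r N:
   probTau r N k m = P(tau^(N)_k = m), computed as the k-fold convolution. *)
Fixpoint probTau (r : nat -> R) (N k m : nat) : R :=
  match k with
  | O => if Nat.eqb m 0 then 1 else 0
  | S k' => sumR (S m) (fun j => probTau r N k' j * pT r N (m - j))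
  end.

Definition logp (x : R) : R := Rmax (ln x) 0.

(* limit of a sequence (chosen classically; meaningful when it converges) *)
Definition lim_seq (u : nat -> R) : R :=
  epsilon (inhabits 0) (fun l => Un_cv u l).

(* Euler's Gamma function via Gauss/Euler limit, for x > 0:
   Gamma(x) = lim n! n^x / (x (x+1) ... (x+n)) *)
Fixpoint prodx (x : R) (n : nat) : R :=
  match n with O => x | S n' => prodx x n' * (x + INR n) end.

Definition GammaR (x : R) : R :=
  lim_seq (fun n => INR (fact n) * Rpower (INR n) x / prodx x n).

Definition EulerGamma : R :=
  lim_seq (fun n => sumR (S n) (fun i => / INR (S i)) - ln (INR (S n))).

(* density of Y_s (Dickman subordinator) on (0,1]:
   f_s(t) = s t^(s-1) e^(-gamma s) / Gamma(s+1) *)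
Definition dickman_f01 (s t : R) : R :=
  s * Rpower t (s - 1) * exp (- EulerGamma * s) / GammaR (s + 1).

(* Main.v *)
Require Import Defs.
From Stdlib Require Import Factorial Reals Lra Lia ZArith ClassicalEpsilon.
Open Scope R_scope.


Lemma lnle (x y : R) : 0 < x -> x <= y -> ln x <= ln y.
Proof. intros hx [h|h]. left; apply ln_increasing; lra. subst; lra. Qed.

Lemma exple (x y : R) : x <= y -> exp x <= exp y.
Proof. intros [h|h]. left; apply exp_increasing; lra. subst; lra. Qed.

Lemma ln_le_sub1 (x : R) : 0 < x -> ln x <= x - 1.
Proof. intros hx. pose proof (exp_ineq1_le (ln x)). rewrite exp_ln in H; lra. Qed.

Lemma ln_ge_1inv (x : R) : 0 < x -> 1 - / x <= ln x.
Proof. intros hx. pose proof (ln_le_sub1 (/ x) (Rinv_0_lt_compat _ hx)).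
  rewrite ln_Rinv in H; lra. Qed.

Lemma ln1p_le (x : R) : 0 <= x -> ln (1 + x) <= x.
Proof. intros; pose proof (ln_le_sub1 (1+x)); lra. Qed.

Lemma ln1p_ge0 (x : R) : 0 <= x -> 0 <= ln (1 + x).
Proof. intros; rewrite <- ln_1; apply lnle; lra. Qed.

Lemma sumR_ext (n : nat) (f g : nat -> R) :
  (forall i, (i < n)%nat -> f i = g i) -> sumR n f = sumR n g.
Proof. induction n; simpl; intros H; auto. rewrite IHn. rewrite H; auto. intros; apply H; lia. Qed.

Lemma sumR_le (n : nat) (f g : nat -> R) :
  (forall i, (i < n)%nat -> f i <= g i) -> sumR n f <= sumR n g.
Proof. induction n; simpl; intros H. lra. pose proof (H n (Nat.lt_succ_diag_r n)).
  assert (sumR n f <= sumR n g) by (apply IHn; intros; apply H; lia). lra. Qed.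

Lemma sumR_nonneg (n : nat) (f : nat -> R) :
  (forall i, (i < n)%nat -> 0 <= f i) -> 0 <= sumR n f.
Proof. intros H. replace 0 with (sumR n (fun _ => 0)).
  apply sumR_le; auto. induction n; simpl; auto. rewrite IHn; [lra|]. intros; apply H; lia. Qed.

Lemma sumR_plus (n : nat) (f g : nat -> R) :
  sumR n (fun i => f i + g i) = sumR n f + sumR n g.
Proof. induction n; simpl; lra. Qed.

Lemma sumR_minus (n : nat) (f g : nat -> R) :
  sumR n (fun i => f i - g i) = sumR n f - sumR n g.
Proof. induction n; simpl; lra. Qed.

Lemma sumR_scal (n : nat) (c : R) (f : nat -> R) :
  sumR n (fun i => c * f i) = c * sumR n f.
Proof. induction n; simpl; lra. Qed.

Lemma sumR_front (n : nat) (f : nat -> R) :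
  sumR (S n) f = f 0%nat + sumR n (fun i => f (S i)).
Proof. induction n; simpl in *; [lra|]. rewrite IHn; lra. Qed.

Lemma sumR_zero (n : nat) (f : nat -> R) : (forall i, (i < n)%nat -> f i = 0) -> sumR n f = 0.
Proof. intros H; induction n; simpl; auto. rewrite IHn, H; try lra; try lia. intros; apply H; lia. Qed.

Lemma sumR_mono (n M : nat) (q : nat -> R) :
  (forall i, 0 <= q i) -> (n <= M)%nat -> sumR n q <= sumR M q.
Proof. intros H. induction 1; [lra|]. simpl. pose proof (H m); lra. Qed.

Lemma sumR_supp (n M : nat) (q : nat -> R) :
  (forall i, 0 <= q i) -> (forall i, (M <= i)%nat -> q i = 0) -> sumR n q <= sumR M q.
Proof. intros H0 H1. destruct (Nat.le_gt_cases n M). apply sumR_mono; auto.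
  assert (forall d, sumR (M + d) q = sumR M q).
  { induction d. rewrite Nat.add_0_r; auto. rewrite Nat.add_succ_r; simpl. rewrite IHd, H1; [lra|lia]. }
  replace n with (M + (n - M))%nat by lia. rewrite H2; lra. Qed.

Lemma sumR_rev (n : nat) (f : nat -> R) :
  sumR n f = sumR n (fun i => f (n - 1 - i)%nat).
Proof. revert f; induction n; intros f; auto.
  rewrite (sumR_front n (fun i => f (S n - 1 - i)%nat)).
  change (sumR (S n) f) with (sumR n f + f n). rewrite (IHn f).
  replace (S n - 1 - 0)%nat with n by lia.
  rewrite Rplus_comm. f_equal. apply sumR_ext. intros. f_equal. lia. Qed.

Lemma sumR_exch (n : nat) (H : nat -> nat -> R) :
  sumR n (fun j => sumR (S j) (fun i => H i j)) =
  sumR n (fun i => sumR (n - i) (fun a => H i (i + a)%nat)).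
Proof. induction n; auto. change (sumR (S n) (fun j => sumR (S j) (fun i => H i j))) with
  (sumR n (fun j => sumR (S j) (fun i => H i j)) + sumR (S n) (fun i => H i n)). rewrite IHn.
  rewrite (sumR_ext (S n) (fun i => sumR (S n - i) (fun a => H i (i + a)%nat))
     (fun i => sumR (n - i) (fun a => H i (i + a)%nat) + H i n)).
  - rewrite sumR_plus. change (sumR (S n) (fun i => sumR (n - i) (fun a => H i (i + a)%nat))) with
    (sumR n (fun i => sumR (n - i) (fun a => H i (i + a)%nat)) + sumR (n - n) (fun a => H n (n + a)%nat)).
    replace (n - n)%nat with 0%nat by lia. simpl. lra.
  - intros i hi. replace (S n - i)%nat with (S (n - i)) by lia. simpl.
    replace (i + (n - i))%nat with n by lia. lra. Qed.

Lemma ln_div (x y : R) : 0 < x -> 0 < y -> ln (x / y) = ln x - ln y.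
Proof. intros. unfold Rdiv. rewrite ln_mult, ln_Rinv; auto. apply Rinv_0_lt_compat; auto. Qed.

Lemma sumR_S (n : nat) (f : nat -> R) : sumR (S n) f = sumR n f + f n.
Proof. reflexivity. Qed.

Lemma sumR_ge_term (n j : nat) (f : nat -> R) :
  (forall i, 0 <= f i) -> (j < n)%nat -> f j <= sumR n f.
Proof. intros H; induction n; intros hj. lia. rewrite sumR_S.
  destruct (Nat.eq_dec j n). subst. pose proof (sumR_nonneg n f (fun i _ => H i)). lra.
  pose proof (IHn ltac:(lia)). pose proof (H n). lra. Qed.

Lemma Rdiv_le_0_compat (x y : R) : 0 <= x -> 0 < y -> 0 <= x / y.
Proof. intros. unfold Rdiv. apply Rmult_le_pos; auto. left; apply Rinv_0_lt_compat; auto. Qed.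

Lemma le_div (x y z : R) : 0 < z -> x * z <= y -> x <= y / z.
Proof. intros hz h. apply Rmult_le_reg_r with z; auto. unfold Rdiv. rewrite Rmult_assoc, Rinv_l; lra. Qed.

Lemma div_le (x y z : R) : 0 < z -> y <= x * z -> y / z <= x.
Proof. intros hz h. apply Rmult_le_reg_r with z; auto. unfold Rdiv. rewrite Rmult_assoc, Rinv_l; lra. Qed.


Lemma sumR_refl (M : nat) (G : nat -> nat -> R) :
  sumR (S M) (fun a => G a (M - a)%nat) = sumR (S M) (fun a => G (M - a)%nat a).
Proof. rewrite sumR_rev. apply sumR_ext. intros i hi. f_equal; lia. Qed.

Lemma probTau_S (r : nat -> R) N k m :
  probTau r N (S k) m = sumR (S m) (fun j => probTau r N k j * pT r N (m - j)).
Proof. reflexivity. Qed.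

Lemma size_biased (r : nat -> R) (N : nat) (k : nat) : forall m : nat,
  INR m * probTau r N (S k) m =
  INR (S k) * sumR (S m) (fun j => probTau r N k j * (INR (m - j) * pT r N (m - j))).
Proof.
  set (P := probTau r N). set (p := pT r N). set (w := fun i => INR i * p i).
  change (forall m, INR m * P (S k) m = INR (S k) * sumR (S m) (fun j => P k j * w (m - j)%nat)).
  induction k; intros m.
  - unfold P at 1; rewrite probTau_S. fold P p. rewrite !sumR_front. simpl (P 0%nat 0%nat).
    rewrite !(sumR_zero m). simpl. unfold w. rewrite Nat.sub_0_r. lra.
    all: intros; unfold P; simpl; ring.
  - unfold P at 1; rewrite probTau_S. fold P p.
    assert (E1 : INR m * sumR (S m) (fun j => P (S k) j * p (m - j)%nat) =
      sumR (S m) (fun j => (INR j * P (S k) j) * p (m - j)%nat) +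
      sumR (S m) (fun j => P (S k) j * w (m - j)%nat)).
    { rewrite <- sumR_scal, <- sumR_plus. apply sumR_ext. intros j hj.
      unfold w. rewrite minus_INR by lia. ring. }
    rewrite E1. clear E1.
    rewrite (sumR_ext _ (fun j => (INR j * P (S k) j) * p (m - j)%nat)
      (fun j => INR (S k) * sumR (S j) (fun i => P k i * w (j - i)%nat * p (m - j)%nat))).
    2:{ intros j hj. rewrite IHk. rewrite Rmult_assoc. f_equal.
        rewrite Rmult_comm, <- sumR_scal. apply sumR_ext; intros; ring. }
    rewrite sumR_scal.
    assert (E2 : sumR (S m) (fun j => sumR (S j) (fun i => P k i * w (j - i)%nat * p (m - j)%nat))
       = sumR (S m) (fun j => P (S k) j * w (m - j)%nat)).
    { rewrite sumR_exch.
      rewrite (sumR_ext (S m) (fun j => P (S k) j * w (m - j)%nat)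
         (fun j => sumR (S j) (fun i => P k i * p (j - i)%nat * w (m - j)%nat))).
      2:{ intros j hj. unfold P at 1; rewrite probTau_S. fold P p. rewrite Rmult_comm, <- sumR_scal.
          apply sumR_ext; intros; ring. }
      rewrite sumR_exch. apply sumR_ext. intros i hi.
      replace (S m - i)%nat with (S (m - i)) by lia.
      rewrite (sumR_ext (S (m - i)) (fun a => P k i * w (i + a - i)%nat * p (m - (i + a))%nat)
        (fun a => (fun x y => P k i * w x * p y) a (m - i - a)%nat)).
      2:{ intros a ha. simpl. f_equal. f_equal. f_equal. lia. f_equal. lia. }
      rewrite (sumR_refl (m - i) (fun x y => P k i * w x * p y)). apply sumR_ext. intros a ha. simpl.
      replace (i + a - i)%nat with a by lia. replace (m - (i + a))%nat with (m - i - a)%nat by lia.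
      ring. }
    rewrite E2. rewrite (S_INR (S k)). ring.
Qed.


Section Prob.
Variable r : nat -> R.
Hypothesis hrpos : forall n : nat, (1 <= n)%nat -> 0 < r n.

Lemma RN_pos N : (1 <= N)%nat -> 0 < RN r N.
Proof. intros hN. destruct N as [|N']; [lia|]. unfold RN. simpl.
  assert (0 <= sumR N' (fun i => r (S i))) by (apply sumR_nonneg; intros; left; apply hrpos; lia).
  pose proof (hrpos (S N')); assert (0 < r (S N')) by (apply H0; lia). lra. Qed.

Lemma pT_nonneg N n : (1 <= N)%nat -> 0 <= pT r N n.
Proof. intros hN. unfold pT. destruct (Nat.leb 1 n) eqn:E1; destruct (Nat.leb n N) eqn:E2; simpl; try lra.
  apply Nat.leb_le in E1. unfold Rdiv. apply Rmult_le_pos. left; apply hrpos; auto.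
  left; apply Rinv_0_lt_compat, RN_pos; auto. Qed.

Lemma pT_big N n : (N < n)%nat -> pT r N n = 0.
Proof. intros h. unfold pT. assert (Nat.leb n N = false) by (apply Nat.leb_gt; auto).
  rewrite H. destruct (Nat.leb 1 n); reflexivity. Qed.

Lemma pT_zero N : pT r N 0 = 0.
Proof. reflexivity. Qed.

Lemma probTau_nonneg N k m : (1 <= N)%nat -> 0 <= probTau r N k m.
Proof. intros hN. revert m; induction k; intros m. simpl. destruct (Nat.eqb m 0); lra.
  rewrite probTau_S. apply sumR_nonneg. intros. apply Rmult_le_pos; auto. apply pT_nonneg; auto. Qed.

Definition phi N (lam : R) := sumR (S N) (fun n => pT r N n * exp (- lam * INR n)).

Lemma phi_nonneg N lam : (1 <= N)%nat -> 0 <= phi N lam.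
Proof. intros; unfold phi; apply sumR_nonneg; intros; apply Rmult_le_pos; [apply pT_nonneg; auto| left; apply exp_pos]. Qed.

Lemma expmom N lam : (1 <= N)%nat -> forall k M,
  sumR (S M) (fun j => probTau r N k j * exp (- lam * INR j)) <= phi N lam ^ k.
Proof. intros hN k. induction k; intros M.
  - rewrite sumR_front. rewrite sumR_zero. simpl. rewrite Rmult_0_r, exp_0. lra.
    intros; simpl; lra.
  - rewrite (sumR_ext _ _ (fun j => sumR (S j) (fun i => probTau r N k i * pT r N (j - i) * exp (- lam * INR j)))).
    2:{ intros j hj. rewrite probTau_S. rewrite Rmult_comm, <- sumR_scal. apply sumR_ext; intros; ring. }
    rewrite sumR_exch.
    apply Rle_trans with (sumR (S M) (fun i => (probTau r N k i * exp (- lam * INR i)) * phi N lam)).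
    + apply sumR_le. intros i hi.
      rewrite (sumR_ext _ _ (fun a => (probTau r N k i * exp (- lam * INR i)) * (pT r N a * exp (- lam * INR a)))).
      2:{ intros a ha. replace (i + a - i)%nat with a by lia. rewrite plus_INR.
          replace (- lam * (INR i + INR a)) with (- lam * INR i + - lam * INR a) by ring.
          rewrite exp_plus. ring. }
      rewrite sumR_scal. apply Rmult_le_compat_l.
      apply Rmult_le_pos; [apply probTau_nonneg; auto| left; apply exp_pos].
      unfold phi. apply sumR_supp. intros; apply Rmult_le_pos; [apply pT_nonneg; auto| left; apply exp_pos].
      intros a ha. rewrite pT_big by lia. ring.
    + rewrite sumR_ext with (g := fun i => phi N lam * (probTau r N k i * exp (- lam * INR i))) by (intros; ring).
      rewrite sumR_scal. simpl. apply Rmult_le_compat_l. apply phi_nonneg; auto. apply IHk.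
Qed.

Lemma local_bound N k m lam A : (1 <= N)%nat -> (1 <= m)%nat -> 0 <= lam ->
  (forall n, INR n * pT r N n <= A) ->
  probTau r N (S k) m <= INR (S k) / INR m * A * exp (lam * INR m) * phi N lam ^ k.
Proof. intros hN hm hl hw.
  assert (hmpos : 0 < INR m) by (apply lt_0_INR; lia).
  assert (hA : 0 <= A) by (pose proof (hw 0%nat); simpl in H; lra).
  pose proof (size_biased r N k m) as SB.
  assert (B : INR m * probTau r N (S k) m <= INR (S k) * (A * (exp (lam * INR m) * phi N lam ^ k))).
  { rewrite SB. apply Rmult_le_compat_l. apply pos_INR.
    apply Rle_trans with (sumR (S m) (fun j => A * (exp (lam * INR m) * (probTau r N k j * exp (- lam * INR j))))).
    - apply sumR_le. intros j hj.
      assert (E : 1 <= exp (lam * INR m) * exp (- lam * INR j)).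
      { rewrite <- exp_plus. rewrite <- exp_0. apply exple.
        assert (INR j <= INR m) by (apply le_INR; lia). nra. }
      pose proof (hw (m - j)%nat). pose proof (probTau_nonneg N k j hN).
      assert (0 <= INR (m - j) * pT r N (m - j)) by (apply Rmult_le_pos; [apply pos_INR|apply pT_nonneg; auto]).
      set (P := probTau r N k j) in *. set (w := INR (m - j) * pT r N (m - j)) in *.
      set (e1 := exp (lam * INR m)) in *. set (e2 := exp (- lam * INR j)) in *.
      replace (A * (e1 * (P * e2))) with (P * (A * (e1 * e2))) by ring.
      apply Rmult_le_compat_l; auto. nra.
    - rewrite sumR_scal, sumR_scal. apply Rmult_le_compat_l; auto.
      apply Rmult_le_compat_l. left; apply exp_pos. apply expmom; auto. }
  unfold Rdiv. apply Rmult_le_reg_l with (INR m); auto.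
  replace (INR m * (INR (S k) * / INR m * A * exp (lam * INR m) * phi N lam ^ k)) with
    (INR (S k) * (A * (exp (lam * INR m) * phi N lam ^ k))) by (field; lra). auto.
Qed.

End Prob.

Lemma probTau_small (r : nat -> R) N : forall k m, (m < k)%nat -> probTau r N k m = 0.
Proof. induction k; intros m hm. lia. rewrite probTau_S. apply sumR_zero. intros j hj.
  destruct (Nat.lt_ge_cases j k). rewrite IHk; auto; ring.
  replace (m - j)%nat with 0%nat by lia. rewrite pT_zero. ring. Qed.


Lemma INR_S_pos i : 0 < INR (S i).
Proof. apply lt_0_INR; lia. Qed.

Lemma harm_lo (n1 : nat) : (1 <= n1)%nat -> forall N,
  ln (INR N + 1) - ln (INR n1) <= sumR N (fun i => if Nat.leb n1 (S i) then / INR (S i) else 0).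
Proof. intros h1 N. assert (hn1 : 0 < INR n1) by (apply lt_0_INR; lia).
  induction N.
  - simpl. rewrite Rplus_0_l, ln_1. assert (0 <= ln (INR n1)). { rewrite <- ln_1. apply lnle; try lra.
      replace 1 with (INR 1) by reflexivity. apply le_INR; auto. } lra.
  - rewrite sumR_S. destruct (Nat.leb n1 (S N)) eqn:E.
    + assert (ln (INR (S N) + 1) - ln (INR N + 1) <= / INR (S N)).
      { rewrite S_INR. rewrite <- ln_div by (pose proof (pos_INR N); lra).
        pose proof (pos_INR N). eapply Rle_trans. apply ln_le_sub1. apply Rdiv_lt_0_compat; lra.
        apply Req_le. field. lra. } lra.
    + apply Nat.leb_gt in E.
      assert (0 <= sumR N (fun i => if Nat.leb n1 (S i) then / INR (S i) else 0)).
      { apply sumR_nonneg. intros. destruct (Nat.leb n1 (S i)). left; apply Rinv_0_lt_compat, INR_S_pos. lra. }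
      assert (ln (INR (S N) + 1) <= ln (INR n1)).
      { apply lnle. pose proof (pos_INR (S N)); lra. replace (INR (S N) + 1) with (INR (S (S N))) by (rewrite (S_INR (S N)); lra).
        apply le_INR; lia. } lra.
Qed.

Lemma harm_up (N : nat) : (1 <= N)%nat -> sumR N (fun i => / INR (S i)) <= 1 + ln (INR N).
Proof. induction N; intros h. lia. destruct N. simpl. rewrite ln_1. lra.
  change (sumR (S (S N)) (fun i => / INR (S i))) with (sumR (S N) (fun i => / INR (S i)) + / INR (S (S N))).
  assert (/ INR (S (S N)) <= ln (INR (S (S N))) - ln (INR (S N))).
  { rewrite <- ln_div by apply INR_S_pos. pose proof (ln_ge_1inv (INR (S (S N)) / INR (S N))).
    pose proof (INR_S_pos N). pose proof (INR_S_pos (S N)).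
    assert (E : 1 - / (INR (S (S N)) / INR (S N)) = / INR (S (S N))).
    { rewrite (S_INR (S N)). field. lra. }
    rewrite E in H. apply H. apply Rdiv_lt_0_compat; lra. }
  pose proof (IHN ltac:(lia)). lra. Qed.

Lemma geo_tail (lam : R) : 0 < lam -> forall N,
  sumR N (fun i => lam * exp (- lam * INR (S i))) <= 1 - exp (- lam * INR N).
Proof. intros hl N. induction N.
  - simpl. rewrite Rmult_0_r, exp_0. lra.
  - rewrite sumR_S. assert (lam * exp (- lam * INR (S N)) <= exp (- lam * INR N) - exp (- lam * INR (S N))).
    { rewrite S_INR. replace (- lam * (INR N + 1)) with (- lam * INR N + - lam) by ring.
      rewrite exp_plus. pose proof (exp_ineq1_le lam). pose proof (exp_pos (- lam * INR N)).
      assert (exp (- lam) * exp lam = 1) by (rewrite <- exp_plus; replace (- lam + lam) with 0 by ring; apply exp_0).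
      pose proof (exp_pos (- lam)).
      assert ((1 + lam) * exp (- lam) <= 1) by nra.
      replace (exp (- lam * INR N) - exp (- lam * INR N) * exp (- lam)) with (exp (- lam * INR N) * (1 - exp (- lam))) by ring.
      replace (lam * (exp (- lam * INR N) * exp (- lam))) with (exp (- lam * INR N) * (lam * exp (- lam))) by ring.
      apply Rmult_le_compat_l; lra. }
    lra. Qed.

Section Asym.
Variable r : nat -> R.
Variable a : R.
Hypothesis ha : 0 < a.
Hypothesis hrpos : forall n : nat, (1 <= n)%nat -> 0 < r n.
Hypothesis hrasym : Un_cv (fun n => INR n * r n) a.

Lemma asym (eta : R) : 0 < eta -> exists n0 : nat, (1 <= n0)%nat /\ forall n, (n0 <= n)%nat ->
  (1 - eta) * a <= INR n * r n <= (1 + eta) * a.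
Proof. intros he. destruct (hrasym (eta * a)) as [M HM]. nra.
  exists (S M). split. lia. intros n hn. specialize (HM n ltac:(lia)). unfold R_dist in HM.
  apply Rabs_def2 in HM. lra. Qed.

Lemma bound_A : exists A0, 0 < A0 /\ forall n, (1 <= n)%nat -> INR n * r n <= A0.
Proof. destruct (asym 1 Rlt_0_1) as [n0 [h0 H0]].
  set (S1 := sumR n0 (fun i => INR (S i) * r (S i))).
  exists (2 * a + S1). assert (0 <= S1).
  { apply sumR_nonneg. intros; apply Rmult_le_pos. apply pos_INR. left; apply hrpos; lia. }
  split. lra. intros n hn. destruct (Nat.le_gt_cases n0 n). specialize (H0 n H1). lra.
  destruct n. lia. assert (INR (S n) * r (S n) <= S1).
  { unfold S1. apply (sumR_ge_term n0 n (fun i => INR (S i) * r (S i))).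
    intros; apply Rmult_le_pos. apply pos_INR. left; apply hrpos; lia. lia. }
  lra. Qed.

Lemma D_lower N n0 n1 lam rho :
  (1 <= n1)%nat -> (n0 <= n1)%nat -> 0 < lam -> 1 <= lam * INR n1 -> 0 <= rho ->
  (forall n, (n0 <= n)%nat -> rho <= INR n * r n) ->
  rho * (ln (INR N + 1) - ln (INR n1) - 1) <=
  sumR N (fun i => r (S i) * (1 - exp (- lam * INR (S i)))).
Proof. intros h1 h01 hl hl1 hrho hr.
  apply Rle_trans with (rho * (sumR N (fun i => if Nat.leb n1 (S i) then / INR (S i) else 0)
                          - sumR N (fun i => lam * exp (- lam * INR (S i))))).
  { apply Rmult_le_compat_l; auto. pose proof (harm_lo n1 h1 N). pose proof (geo_tail lam hl N).
    pose proof (exp_pos (- lam * INR N)). lra. }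
  rewrite <- sumR_minus, <- sumR_scal. apply sumR_le. intros i hi.
  pose proof (INR_S_pos i) as hp. pose proof (exp_pos (- lam * INR (S i))) as he.
  assert (hle : exp (- lam * INR (S i)) <= 1).
  { rewrite <- exp_0. apply exple. pose proof (pos_INR (S i)). nra. }
  assert (0 < r (S i)) by (apply hrpos; lia).
  destruct (Nat.leb n1 (S i)) eqn:E.
  - apply Nat.leb_le in E. specialize (hr (S i) ltac:(lia)).
    assert (hi1 : / INR (S i) <= lam).
    { assert (INR n1 <= INR (S i)) by (apply le_INR; auto).
      apply Rmult_le_reg_l with (INR (S i)); auto. rewrite Rinv_r by lra. nra. }
    assert (rho * / INR (S i) <= r (S i)).
    { apply Rmult_le_reg_l with (INR (S i)); auto. rewrite <- Rmult_assoc, (Rmult_comm _ rho), Rmult_assoc, Rinv_r by lra. lra. }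
    assert (rho * (lam * exp (- lam * INR (S i))) >= rho * (/ INR (S i) * exp (- lam * INR (S i)))).
    { apply Rle_ge, Rmult_le_compat_l; auto. apply Rmult_le_compat_r; lra. }
    nra.
  - assert (0 <= rho * (lam * exp (- lam * INR (S i)))) by (apply Rmult_le_pos; auto; nra). nra.
Qed.

Lemma RN_lower N n0 rho :
  (1 <= n0)%nat -> 0 <= rho -> (forall n, (n0 <= n)%nat -> rho <= INR n * r n) ->
  rho * (ln (INR N + 1) - ln (INR n0)) <= RN r N.
Proof. intros h0 hrho hr. eapply Rle_trans. apply Rmult_le_compat_l; auto. apply harm_lo; auto.
  unfold RN. rewrite <- sumR_scal. apply sumR_le. intros i hi. pose proof (INR_S_pos i).
  assert (0 < r (S i)) by (apply hrpos; lia).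
  destruct (Nat.leb n0 (S i)) eqn:E. apply Nat.leb_le in E. specialize (hr _ E).
  apply Rmult_le_reg_l with (INR (S i)); auto. rewrite <- Rmult_assoc, (Rmult_comm _ rho), Rmult_assoc, Rinv_r by lra. lra.
  lra. Qed.

Lemma RN_upper N n0 rho :
  (1 <= N)%nat -> (forall n, (n0 <= n)%nat -> INR n * r n <= rho) -> 0 <= rho ->
  RN r N <= sumR n0 (fun i => r (S i)) + rho * (1 + ln (INR N)).
Proof. intros hN hr hrho. eapply Rle_trans with
   (sumR N (fun i => if Nat.ltb (S i) n0 then r (S i) else 0) + rho * sumR N (fun i => / INR (S i))).
  - unfold RN. rewrite <- sumR_scal, <- sumR_plus. apply sumR_le. intros i hi.
    pose proof (INR_S_pos i). assert (0 < r (S i)) by (apply hrpos; lia).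
    assert (0 <= rho * / INR (S i)) by (apply Rmult_le_pos; auto; left; apply Rinv_0_lt_compat; auto).
    destruct (Nat.ltb (S i) n0) eqn:E. lra. apply Nat.ltb_ge in E. specialize (hr _ E).
    assert (r (S i) <= rho * / INR (S i)).
    { apply Rmult_le_reg_l with (INR (S i)); auto. rewrite <- Rmult_assoc, (Rmult_comm _ rho), Rmult_assoc, Rinv_r by lra. lra. } lra.
  - apply Rplus_le_compat. eapply Rle_trans. apply sumR_supp with (M := n0).
    + intros i. destruct (Nat.ltb (S i) n0). left; apply hrpos; lia. lra.
    + intros i hi. assert (Nat.ltb (S i) n0 = false) by (apply Nat.ltb_ge; lia). rewrite H; auto.
    + apply sumR_le. intros i hi. destruct (Nat.ltb (S i) n0). lra. left; apply hrpos; lia.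
    + apply Rmult_le_compat_l; auto. apply harm_up; auto.
Qed.

Lemma phi_bound N lam : (1 <= N)%nat ->
  phi r N lam <= exp (- (sumR N (fun i => r (S i) * (1 - exp (- lam * INR (S i))))) / RN r N).
Proof. intros hN. pose proof (RN_pos r hrpos N hN) as hR.
  assert (phi r N lam = 1 + (- (sumR N (fun i => r (S i) * (1 - exp (- lam * INR (S i))))) / RN r N)).
  { unfold phi. rewrite sumR_front. rewrite pT_zero, Rmult_0_l, Rplus_0_l.
    rewrite (sumR_ext _ _ (fun i => / RN r N * (r (S i) * exp (- lam * INR (S i))))).
    2:{ intros i hi. unfold pT. assert (Nat.leb 1 (S i) = true) by (apply Nat.leb_le; lia).
        assert (Nat.leb (S i) N = true) by (apply Nat.leb_le; lia). rewrite H, H0. simpl. unfold Rdiv. ring. }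
    rewrite sumR_scal. rewrite (sumR_ext _ (fun i => r (S i) * (1 - exp (- lam * INR (S i)))) (fun i => r (S i) - r (S i) * exp (- lam * INR (S i)))) by (intros; ring).
    rewrite sumR_minus. fold (RN r N). field. lra. }
  rewrite H. apply exp_ineq1_le. Qed.

End Asym.


Lemma expo_caseA (s L lt l1 th e Q : R) :
  0 < s -> 1 <= L -> lt <= 0 -> -L <= lt -> 0 <= l1 -> l1 <= 2 * L ->
  0 < e <= 1/2 -> 1 - e / 2 <= th <= 1 -> 0 <= Q ->
  (2 <= l1 - lt -> th * (s - 1 / L) * (l1 - lt - 2) <= Q) ->
  1 + s - Q <= (1 - e / 2) * s * lt + 4 + 3 * s - (1 - e / 2) * s * l1.
Proof. intros hs hL hlt hlt2 hl1 hl1b he hth hQ HQ.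
  assert (Hmain : th * s * (l1 - lt) - 2 * s - 3 <= Q).
  { destruct (Rle_lt_dec 2 (l1 - lt)) as [hX|hX].
    - specialize (HQ hX). set (X := l1 - lt) in *.
      assert (X <= 3 * L) by (unfold X; lra).
      assert (th * (X - 2) / L <= 3).
      { apply Rmult_le_reg_l with L. lra. unfold Rdiv. rewrite <- Rmult_assoc, (Rmult_comm L), Rmult_assoc, Rinv_r by lra.
        assert (th * (X - 2) <= X - 2) by nra. nra. }
      assert (th * (s - 1 / L) * (X - 2) = th * s * X - 2 * th * s - th * (X - 2) / L) by (field; lra).
      nra.
    - assert (0 <= th) by lra. assert (0 <= th * s) by (apply Rmult_le_pos; lra).
      assert (th * s <= 1 * s) by (apply Rmult_le_compat_r; lra).
      assert (th * s * (l1 - lt) <= th * s * 2) by (apply Rmult_le_compat_l; lra). lra. }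
  assert (0 <= (th - (1 - e / 2)) * s) by (apply Rmult_le_pos; lra).
  assert (0 <= ((th - (1 - e / 2)) * s) * (- lt)) by (apply Rmult_le_pos; lra).
  assert (0 <= ((th - (1 - e / 2)) * s) * l1) by (apply Rmult_le_pos; lra).
  assert (th * s * (l1 - lt) = th * s * l1 - th * s * lt) by ring.
  nra.
Qed.

Lemma expo_caseB (s L lt l1 th e Q ln0 : R) :
  0 < s -> s < 1 -> 1 <= L -> lt <= 0 -> -L <= lt -> 0 <= l1 -> l1 <= s ->
  0 < e <= 1/2 -> 1 - 3 * e / 8 <= th <= 1 -> 0 <= ln0 ->
  ln0 + 1 <= e / 8 * L ->
  th * (s - 1 / L) * (L - ln0 - 1) <= Q ->
  1 + s - Q <= (1 - e / 2) * s * lt + 4 + 3 * s - (1 - e / 2) * s * l1.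
Proof. intros hs hs1 hL hlt hlt2 hl1 hl1b he hth hn0 hN HQ.
  assert (hle : 0 <= L - ln0 - 1) by nra.
  assert (th * (L - ln0 - 1) / L <= 1).
  { apply Rmult_le_reg_l with L. lra. unfold Rdiv. rewrite <- Rmult_assoc, (Rmult_comm L), Rmult_assoc, Rinv_r by lra.
    nra. }
  assert (th * (s - 1 / L) * (L - ln0 - 1) = th * s * (L - ln0 - 1) - th * (L - ln0 - 1) / L) by (field; lra).
  assert (E2 : th * s * (L - ln0 - 1) = th * s * L - th * s * (ln0 + 1)) by ring.
  assert (Q >= th * s * L - th * s * (ln0 + 1) - 1) by lra.
  assert (0 <= th) by lra.
  assert (th * s * (ln0 + 1) <= s * (ln0 + 1)).
  { assert (0 <= s * (ln0 + 1)) by (apply Rmult_le_pos; lra).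
    assert (th * (s * (ln0 + 1)) <= 1 * (s * (ln0 + 1))) by (apply Rmult_le_compat_r; lra). lra. }
  assert (0 <= (1 - e / 2) * s * (lt + L)) by (apply Rmult_le_pos; [apply Rmult_le_pos|]; lra).
  assert ((1 - e / 2) * s * l1 <= s * s).
  { assert ((1 - e / 2) * s * l1 <= 1 * s * l1) by (apply Rmult_le_compat_r; [lra| apply Rmult_le_compat_r; lra]).
    assert (s * l1 <= s * s) by (apply Rmult_le_compat_l; lra). lra. }
  assert (s * s <= s * 1) by (apply Rmult_le_compat_l; lra).
  assert (s * (ln0 + 1) <= s * (e / 8 * L)) by (apply Rmult_le_compat_l; lra).
  assert (0 <= (th - 1 + 3 * e / 8) * s * L) by (apply Rmult_le_pos; [apply Rmult_le_pos|]; lra).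
  assert (E3 : (1 - e / 2) * s * (lt + L) = (1 - e / 2) * s * lt + (1 - e / 2) * s * L) by ring.
  assert (E4 : (th - 1 + 3 * e / 8) * s * L = th * s * L - s * L + 3 * e / 8 * s * L) by ring.
  assert (E5 : s * (e / 8 * L) = e / 8 * s * L) by ring.
  assert (E6 : (1 - e / 2) * s * L = s * L - 4 * e / 8 * s * L) by field.
  lra.
Qed.


Lemma up_nat (x : R) : 0 < x -> exists u : nat, x < INR u <= x + 1.
Proof. intros hx. destruct (archimed x) as [h1 h2].
  assert (0 < up x)%Z by (apply lt_IZR; lra).
  exists (Z.to_nat (up x)). rewrite INR_IZR_INZ, Z2Nat.id by lia. lra. Qed.

Lemma big_N (T : R) : exists Ne : nat, forall N, (Ne <= N)%nat -> 3 <= INR N /\ T <= ln (INR N).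
Proof. destruct (up_nat (exp T) (exp_pos T)) as [u [hu1 hu2]].
  exists (u + 3)%nat. intros N hN. assert (INR (u + 3) <= INR N) by (apply le_INR; auto).
  rewrite plus_INR in H. simpl in H. pose proof (pos_INR u). split. lra.
  rewrite <- (ln_exp T). apply lnle. apply exp_pos. lra. Qed.

Lemma ln_ge1 (x : R) : 3 <= x -> 1 <= ln x.
Proof. intros. rewrite <- (ln_exp 1). apply lnle. apply exp_pos. pose proof exp_le_3. lra. Qed.

Lemma ln_nat_nonneg (n : nat) : (1 <= n)%nat -> 0 <= ln (INR n).
Proof. intros. rewrite <- ln_1. apply lnle. lra. replace 1 with (INR 1) by reflexivity. apply le_INR; auto. Qed.

Lemma exp_pow_n (x : R) (n : nat) : exp x ^ n = exp (INR n * x).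
Proof. induction n. simpl. rewrite Rmult_0_l, exp_0; auto.
  rewrite S_INR. simpl. rewrite IHn. rewrite <- exp_plus. f_equal. ring. Qed.

Section Core.
Variable r : nat -> R.
Variable a : R.
Hypothesis ha : 0 < a.
Hypothesis hrpos : forall n : nat, (1 <= n)%nat -> 0 < r n.
Hypothesis hrasym : Un_cv (fun n => INR n * r n) a.

Definition Phi (e s t : R) := (1 - e / 2) * s * ln t + 4 + 3 * s - (1 - e / 2) * s * ln (1 + s).

Lemma core : exists K1, 0 < K1 /\ forall e, 0 < e <= 1/2 -> exists Ne : nat,
  forall N k m : nat, (Ne <= N)%nat -> (1 <= k)%nat -> (1 <= m <= N)%nat ->
  probTau r N k m <= K1 * (INR k / ln (INR N) / (INR m / INR N) * / INR N) *
     exp (Phi e (INR k / ln (INR N)) (INR m / INR N)).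
Proof.
  destruct (bound_A r a ha hrpos hrasym) as [A0 [hA0 HA0]].
  destruct (asym r a ha hrasym (1/2) ltac:(lra)) as [n0' [h0' H0']].
  exists (4 * A0 / a). split. apply Rdiv_lt_0_compat; lra.
  intros e he. set (eta := e / 8).
  destruct (asym r a ha hrasym eta ltac:(unfold eta; lra)) as [n0 [h0 H0]].
  set (S0 := sumR n0 (fun i => r (S i))).
  assert (hS0 : 0 <= S0) by (apply sumR_nonneg; intros; left; apply hrpos; lia).
  pose proof (ln_nat_nonneg n0' h0') as hl0'. pose proof (ln_nat_nonneg n0 h0) as hl0.
  assert (hn0pos : 1 <= INR n0) by (replace 1 with (INR 1) by reflexivity; apply le_INR; auto).
  set (T := 1 + 2 * ln (INR n0') + (S0 + (1 + eta) * a) / (eta * a) + (8 / e) * (ln (INR n0) + 1)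
            + 2 * INR n0 + ln (INR n0) + 1).
  assert (hT1 : 0 <= (S0 + (1 + eta) * a) / (eta * a)).
  { apply Rmult_le_pos. unfold eta in *; nra. left; apply Rinv_0_lt_compat; unfold eta; nra. }
  assert (hT2 : 0 <= (8 / e) * (ln (INR n0) + 1)).
  { apply Rmult_le_pos. unfold Rdiv; apply Rmult_le_pos. lra. left; apply Rinv_0_lt_compat; lra. lra. }
  destruct (big_N T) as [Ne HNe]. exists Ne.
  intros N k m hN hk [hm1 hmNn].
  assert (hK1 : 0 < 4 * A0 / a) by (apply Rdiv_lt_0_compat; lra).
  destruct (Nat.lt_ge_cases m k) as [hmk|hkm'].
  { rewrite probTau_small by auto. destruct (HNe N hN) as [hN3 hLT].
    assert (0 < ln (INR N)) by (pose proof (ln_ge1 _ hN3); lra).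
    apply Rmult_le_pos; [apply Rmult_le_pos|left; apply exp_pos]. lra.
    assert (0 < INR m) by (replace 0 with (INR 0) by reflexivity; apply lt_INR; lia).
    assert (0 < INR k) by (replace 0 with (INR 0) by reflexivity; apply lt_INR; lia).
    assert (0 < INR N) by lra.
    unfold Rdiv. repeat apply Rmult_le_pos; left; try apply Rinv_0_lt_compat; auto; try apply Rmult_lt_0_compat; auto;
    try apply Rinv_0_lt_compat; auto. }
  assert (hkm : INR k <= INR m) by (apply le_INR; auto).
  destruct (HNe N hN) as [hN3 hLT].
  assert (hN1 : (1 <= N)%nat) by lia.
  set (L := ln (INR N)) in *.
  assert (hL1 : 1 <= L) by (apply ln_ge1; auto).
  assert (hNpos : 0 < INR N) by lra.
  assert (hmpos : 0 < INR m) by (replace 0 with (INR 0) by reflexivity; apply lt_INR; lia).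
  assert (hmN : INR m <= INR N) by (apply le_INR; auto).
  assert (hkpos : 1 <= INR k) by (replace 1 with (INR 1) by reflexivity; apply le_INR; auto).
  pose proof (RN_pos r hrpos N hN1) as hRpos.
  assert (hLN1 : L <= ln (INR N + 1)) by (apply lnle; lra).
  assert (hRlow : a / 4 * L <= RN r N).
  { eapply Rle_trans; [|apply (RN_lower r hrpos N n0' (a/2)); auto; try lra].
    2:{ intros n hn. specialize (H0' n hn). lra. }
    assert (2 * ln (INR n0') <= L) by (unfold T in hLT; lra). nra. }
  assert (hRup : RN r N <= (1 + 2 * eta) * a * L).
  { eapply Rle_trans. apply (RN_upper r hrpos N n0 ((1 + eta) * a)); auto.
    intros n hn; specialize (H0 n hn); lra. unfold eta; nra. fold S0.
    assert ((S0 + (1 + eta) * a) / (eta * a) <= L) by (unfold T in hLT; lra).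
    assert (S0 + (1 + eta) * a <= eta * a * L).
    { apply Rmult_le_reg_r with (/ (eta * a)). apply Rinv_0_lt_compat; unfold eta; nra.
      rewrite (Rmult_comm (eta * a)), Rmult_assoc, Rinv_r. lra. unfold eta; nra. }
    assert ((1+eta)*a*(1+L) = (1+eta)*a + (1+eta)*a*L) by ring.
    assert ((1+2*eta)*a*L = eta*a*L + (1+eta)*a*L) by ring. fold L. lra. }
  destruct k as [|k']; [lia|].
  set (s := INR (S k') / L).
  assert (hs : 0 < s) by (apply Rdiv_lt_0_compat; lra).
  assert (hsL : s * L = INR (S k')) by (unfold s; field; lra).
  assert (hsN : s <= INR N) by (unfold s; apply Rmult_le_reg_r with L; [lra|]; unfold Rdiv;
      rewrite Rmult_assoc, Rinv_l by lra; nra).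
  set (t := INR m / INR N).
  assert (hlt : ln t = ln (INR m) - L) by (unfold t, L; apply ln_div; lra).
  assert (hlm0 : 0 <= ln (INR m)) by (apply ln_nat_nonneg; auto).
  assert (hlmL : ln (INR m) <= L) by (apply lnle; lra).
  set (mu := 1 + s). set (lam := mu / INR m).
  assert (hlam : 0 < lam) by (unfold lam, mu; apply Rdiv_lt_0_compat; lra).
  assert (hw : forall n, INR n * pT r N n <= A0 / RN r N).
  { intros n. unfold pT. destruct (Nat.leb 1 n) eqn:E1; destruct (Nat.leb n N) eqn:E2; simpl;
    try (rewrite Rmult_0_r; left; apply Rdiv_lt_0_compat; lra).
    apply Nat.leb_le in E1. specialize (HA0 n E1). unfold Rdiv. rewrite <- Rmult_assoc.
    apply Rmult_le_compat_r. left; apply Rinv_0_lt_compat; lra. auto. }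
  pose proof (local_bound r hrpos N k' m lam (A0 / RN r N) hN1 hm1 (Rlt_le _ _ hlam) hw) as LB.
  set (D := sumR N (fun i => r (S i) * (1 - exp (- lam * INR (S i))))) in *.
  pose proof (phi_bound r hrpos N lam hN1) as PB. fold D in PB.
  assert (hphi : phi r N lam ^ k' <= exp (INR k' * (- D / RN r N))).
  { rewrite <- exp_pow_n. apply pow_incr. split; auto. apply phi_nonneg; auto. }
  assert (hlm : lam * INR m = mu) by (unfold lam; field; lra).
  rewrite hlm in LB.
  set (Q := INR k' * (D / RN r N)).
  assert (hD0 : 0 <= D).
  { unfold D. apply sumR_nonneg. intros i hi. apply Rmult_le_pos. left; apply hrpos; lia.
    assert (exp (- lam * INR (S i)) <= 1). { rewrite <- exp_0. apply exple. pose proof (INR_S_pos i). nra. } lra. }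
  assert (hQ0 : 0 <= Q) by (unfold Q; apply Rmult_le_pos; [apply pos_INR|apply Rdiv_le_0_compat; lra]).
  assert (hk' : INR k' = s * L - 1) by (rewrite hsL, S_INR; ring).
  set (th := (1 - eta) / (1 + 2 * eta)).
  assert (hth1 : 1 - 3 * e / 8 <= th).
  { unfold th, eta. apply le_div. lra. nra. }
  assert (hth2 : th <= 1).
  { unfold th, eta. apply div_le. lra. nra. }
  set (rho := (1 - eta) * a).
  assert (hrho : 0 < rho) by (unfold rho, eta; nra).
  assert (Hr : forall n, (n0 <= n)%nat -> rho <= INR n * r n) by (intros n hn; specialize (H0 n hn); unfold rho; lra).
  assert (HQY : forall Y, 0 <= Y -> rho * Y <= D -> th * (s - 1 / L) * Y <= Q).
  { intros Y hY hDY. unfold Q. rewrite hk'.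
    assert (rho * Y / ((1 + 2 * eta) * a * L) <= D / RN r N).
    { apply Rle_trans with (rho * Y / RN r N).
      - unfold Rdiv. apply Rmult_le_compat_l. apply Rmult_le_pos; lra. apply Rinv_le_contravar; lra.
      - unfold Rdiv. apply Rmult_le_compat_r. left; apply Rinv_0_lt_compat; lra. auto. }
    assert (0 <= s * L - 1) by lra.
    apply Rle_trans with ((s * L - 1) * (rho * Y / ((1 + 2 * eta) * a * L))).
    - apply Req_le. unfold th, rho. field. unfold eta; repeat split; try lra; nra.
    - apply Rmult_le_compat_l; auto. }
  destruct (up_nat (INR m / mu) ltac:(apply Rdiv_lt_0_compat; unfold mu; lra)) as [u [hu1 hu2]].
  assert (hl1s : ln (1 + s) <= s) by (apply ln1p_le; lra).
  assert (hl10 : 0 <= ln (1 + s)) by (apply ln1p_ge0; lra).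
  assert (hexpo : mu - Q <= Phi e s t).
  { unfold Phi, mu. destruct (Rle_lt_dec (INR n0) (INR m / mu)) as [hA|hB].
    -
      set (n1 := Nat.max n0 u).
      assert (hn1a : INR n0 <= INR n1) by (apply le_INR; lia).
      assert (hn1b : INR u <= INR n1) by (apply le_INR; lia).
      assert (hn1c : INR n1 <= 2 * (INR m / mu)).
      { unfold n1. destruct (Nat.max_spec n0 u) as [[_ ->]|[_ ->]]; lra. }
      assert (hdl : rho * (ln (INR N + 1) - ln (INR n1) - 1) <= D).
      { apply D_lower with n0; auto. lia. lia.
        unfold lam. apply Rle_trans with (mu / INR m * (INR m / mu)). right; field; unfold mu; lra.
        apply Rmult_le_compat_l. left; apply Rdiv_lt_0_compat; unfold mu; lra. lra. lra. }
      assert (hln1 : ln (INR n1) <= ln 2 + ln (INR m) - ln mu).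
      { assert (hmu : 0 < mu) by (unfold mu; lra).
        assert (ln (2 * (INR m / mu)) = ln 2 + ln (INR m) - ln mu).
        { rewrite ln_mult, ln_div; try lra; try (apply Rdiv_lt_0_compat; lra). }
        rewrite <- H. apply lnle. lra. lra. }
      assert (hln2 : ln 2 <= 1) by (pose proof (ln_le_sub1 2); lra).
      apply (expo_caseA s L (ln t) (ln (1 + s)) th e Q); auto; try lra.
      + assert (1 + s <= INR N * INR N) by nra.
        assert (hh : ln (1 + s) <= ln (INR N * INR N)) by (apply lnle; lra).
        rewrite ln_mult in hh by lra. fold L in hh. lra.
      + intros hX. apply HQY. lra. eapply Rle_trans; [|apply hdl]. apply Rmult_le_compat_l. lra.
        unfold mu in hln1. rewrite hlt. lra.
    -
      assert (hu : (u <= n0)%nat).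
      { assert (INR u < INR n0 + 1) by lra. rewrite <- S_INR in H. apply INR_lt in H. lia. }
      assert (hdl : rho * (ln (INR N + 1) - ln (INR n0) - 1) <= D).
      { apply D_lower with n0; auto.
        unfold lam. apply Rle_trans with (mu / INR m * (INR m / mu)). right; field; unfold mu; lra.
        apply Rmult_le_compat_l. left; apply Rdiv_lt_0_compat; unfold mu; lra. lra. lra. }
      assert (hLn0 : 2 * INR n0 <= L /\ (8 / e) * (ln (INR n0) + 1) <= L) by (unfold T in hLT; split; lra).
      assert (hs1 : s < 1).
      { assert (INR m < mu * INR n0).
        { apply Rmult_lt_reg_r with (/ mu). apply Rinv_0_lt_compat; unfold mu; lra.
          rewrite (Rmult_comm mu), Rmult_assoc, Rinv_r by (unfold mu; lra). unfold Rdiv in hB. lra. }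
        assert (s * L <= INR m) by lra.
        unfold mu in H. nra. }
      apply (expo_caseB s L (ln t) (ln (1 + s)) th e Q (ln (INR n0))); auto; try lra.
      + destruct hLn0 as [_ h8]. apply Rmult_le_reg_l with (8 / e). apply Rdiv_lt_0_compat; lra.
        replace (8 / e * (e / 8 * L)) with L by (field; lra). lra.
      + apply HQY. unfold T in hLT; lra. eapply Rle_trans; [|apply hdl]. apply Rmult_le_compat_l. lra. lra. }
  eapply Rle_trans. apply LB.
  replace (INR (S k') / INR m * (A0 / RN r N) * exp mu * phi r N lam ^ k') with
    ((INR (S k') / INR m * (A0 / RN r N) * exp mu) * phi r N lam ^ k') by ring.
  assert (hc1 : 0 <= INR (S k') / INR m) by (apply Rdiv_le_0_compat; lra).
  assert (hc2 : 0 <= A0 / RN r N) by (apply Rdiv_le_0_compat; lra).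
  eapply Rle_trans. apply Rmult_le_compat_l.
  apply Rmult_le_pos. apply Rmult_le_pos; auto. left; apply exp_pos. apply hphi.
  replace (INR (S k') / INR m * (A0 / RN r N) * exp mu * exp (INR k' * (- D / RN r N)))
    with (INR (S k') / INR m * (A0 / RN r N) * exp (mu - Q)).
  2:{ unfold Q. replace (mu - INR k' * (D / RN r N)) with (mu + INR k' * (- D / RN r N)) by (unfold Rdiv; ring). rewrite exp_plus. ring. }
  fold s t. apply Rmult_le_compat.
  - apply Rmult_le_pos; auto.
  - left; apply exp_pos.
  - assert (E : s / t * / INR N = INR (S k') / (L * INR m)) by (unfold s, t; field; repeat split; lra).
    rewrite E. unfold Rdiv. rewrite Rinv_mult.
    replace (INR (S k') * / INR m * (A0 * / RN r N)) with ((INR (S k') * / INR m) * (A0 * / RN r N)) by ring.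
    replace (4 * A0 * / a * (INR (S k') * (/ L * / INR m))) with ((INR (S k') * / INR m) * (A0 * / (a / 4 * L))) by (field; lra).
    apply Rmult_le_compat_l. apply Rmult_le_pos. apply pos_INR. left; apply Rinv_0_lt_compat; lra.
    apply Rmult_le_compat_l. lra. apply Rinv_le_contravar; auto. nra.
  - apply exple. auto.
Qed.

End Core.


Definition gs (y : R) (n : nat) := INR (fact n) * Rpower (INR n) y / prodx y n.

Lemma prodx_S y n : prodx y (S n) = prodx y n * (y + INR (S n)).
Proof. reflexivity. Qed.

Lemma prodx_pos y n : 0 < y -> 0 < prodx y n.
Proof. intros hy; induction n; auto. rewrite prodx_S. apply Rmult_lt_0_compat; auto. pose proof (pos_INR (S n)); lra. Qed.

Lemma prodx_shift y n : prodx (y + 1) n * y = prodx y n * (y + INR n + 1).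
Proof. induction n. simpl. ring. rewrite !prodx_S. rewrite S_INR.
  replace (prodx (y + 1) n * (y + 1 + (INR n + 1)) * y) with (prodx (y + 1) n * y * (y + 1 + (INR n + 1))) by ring.
  rewrite IHn. ring. Qed.

Lemma fact_pos' n : 0 < INR (fact n).
Proof. apply lt_0_INR. apply lt_O_fact. Qed.

Lemma gs_pos y n : 0 < y -> (1 <= n)%nat -> 0 < gs y n.
Proof. intros. unfold gs. apply Rdiv_lt_0_compat. apply Rmult_lt_0_compat. apply fact_pos'.
  unfold Rpower; apply exp_pos. apply prodx_pos; auto. Qed.

Lemma gs_shift y n : 0 < y -> (1 <= n)%nat -> gs (y + 1) n <= y * gs y n.
Proof. intros hy hn. assert (hN : 0 < INR n) by (apply lt_0_INR; lia).
  unfold gs. rewrite Rpower_plus, Rpower_1 by auto.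
  pose proof (prodx_pos y n hy). pose proof (prodx_pos (y+1) n ltac:(lra)).
  assert (E : prodx (y + 1) n = prodx y n * (y + INR n + 1) / y) by (rewrite <- prodx_shift; field; lra).
  rewrite E. pose proof (fact_pos' n). assert (0 < Rpower (INR n) y) by (unfold Rpower; apply exp_pos).
  apply Rle_trans with (y * (INR (fact n) * Rpower (INR n) y / prodx y n) * (INR n / (y + INR n + 1))).
  - right. field. repeat split; lra.
  - rewrite <- (Rmult_1_r (y * _)) at 2. apply Rmult_le_compat_l.
    apply Rmult_le_pos. lra. left; apply Rdiv_lt_0_compat; [apply Rmult_lt_0_compat|]; auto.
    apply div_le; lra. Qed.

Lemma exp_convex_bern (y l : R) : 0 <= y <= 1 -> exp (y * l) <= y * exp l + (1 - y).
Proof. intros hy. set (c := y * l).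
  assert (h1 : exp c * (1 + (l - c)) <= exp l).
  { replace l with (c + (l - c)) at 2 by ring. rewrite exp_plus. apply Rmult_le_compat_l. left; apply exp_pos. apply exp_ineq1_le. }
  assert (h2 : exp c * (1 + (0 - c)) <= 1).
  { pose proof (exp_ineq1_le (0 - c)). assert (exp c * exp (0 - c) = 1) by (rewrite <- exp_plus; replace (c + (0 - c)) with 0 by ring; apply exp_0).
    pose proof (exp_pos c). apply Rle_trans with (exp c * exp (0 - c)). apply Rmult_le_compat_l; lra. lra. }
  assert (exp c = y * (exp c * (1 + (l - c))) + (1 - y) * (exp c * (1 + (0 - c)))) by (unfold c; ring).
  nra. Qed.

Lemma bernoulli (x y : R) : 0 <= x -> 0 <= y <= 1 -> Rpower (1 + x) y <= 1 + y * x.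
Proof. intros hx hy. unfold Rpower. eapply Rle_trans. apply exp_convex_bern; auto.
  rewrite exp_ln by lra. lra. Qed.

Lemma prodx_lower y n : 0 < y <= 1 -> y * INR (fact n) * Rpower (INR n + 1) y <= prodx y n.
Proof. intros hy. induction n.
  - simpl. replace (0 + 1) with 1 by ring. unfold Rpower. rewrite ln_1, Rmult_0_r, exp_0. lra.
  - rewrite prodx_S. rewrite fact_simpl, mult_INR.
    assert (hn : 0 < INR n + 1) by (pose proof (pos_INR n); lra).
    assert (E : Rpower (INR (S n) + 1) y = Rpower (INR n + 1) y * Rpower (1 + / (INR n + 1)) y).
    { rewrite Rpower_mult_distr. f_equal. rewrite S_INR. field. lra. lra.
      pose proof (Rinv_0_lt_compat _ hn); lra. }
    rewrite E. pose proof (bernoulli (/ (INR n + 1)) y ltac:(left; apply Rinv_0_lt_compat; lra) ltac:(lra)).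
    assert (0 < Rpower (INR n + 1) y) by (unfold Rpower; apply exp_pos).
    pose proof (fact_pos' n).
    apply Rle_trans with (y * INR (fact n) * Rpower (INR n + 1) y * (INR (S n) * (1 + y * / (INR n + 1)))).
    + replace (y * (INR (S n) * INR (fact n)) * (Rpower (INR n + 1) y * Rpower (1 + / (INR n + 1)) y))
       with (y * INR (fact n) * Rpower (INR n + 1) y * (INR (S n) * Rpower (1 + / (INR n + 1)) y)) by ring.
      apply Rmult_le_compat_l. repeat apply Rmult_le_pos; lra.
      apply Rmult_le_compat_l. apply pos_INR. auto.
    + assert (INR (S n) * (1 + y * / (INR n + 1)) = y + INR (S n)) by (rewrite S_INR; field; lra).
      rewrite H2. apply Rmult_le_compat_r. rewrite S_INR; lra. auto.
Qed.

Lemma gs_small y n : 0 < y <= 1 -> (1 <= n)%nat -> gs y n <= / y.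
Proof. intros hy hn. unfold gs. pose proof (prodx_lower y n hy). pose proof (fact_pos' n).
  assert (hN : 0 < INR n) by (apply lt_0_INR; lia).
  assert (Rpower (INR n) y <= Rpower (INR n + 1) y) by (apply Rle_Rpower_l; lra).
  apply div_le. apply prodx_pos; lra.
  apply Rle_trans with (/ y * (y * INR (fact n) * Rpower (INR n + 1) y)).
  replace (/ y * (y * INR (fact n) * Rpower (INR n + 1) y)) with (INR (fact n) * Rpower (INR n + 1) y) by (field; lra).
  apply Rmult_le_compat_l; lra.
  apply Rmult_le_compat_l. left; apply Rinv_0_lt_compat; lra. auto. Qed.

Lemma gs_bound (j : nat) : forall y, 1 < y <= INR j + 2 -> forall n, (1 <= n)%nat -> gs y n <= Rpower y (INR j).
Proof. induction j; intros y hy n hn.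
  - simpl INR. rewrite Rpower_O by lra. replace y with ((y - 1) + 1) by ring.
    eapply Rle_trans. apply gs_shift; auto; lra.
    pose proof (gs_small (y - 1) n ltac:(simpl in hy; lra) hn).
    apply Rle_trans with ((y - 1) * / (y - 1)). apply Rmult_le_compat_l; lra. right; field; lra.
  - rewrite S_INR in *. destruct (Rle_lt_dec y (INR j + 2)).
    + eapply Rle_trans. apply IHj; auto; lra. apply Rle_Rpower; lra.
    + replace y with ((y - 1) + 1) at 1 by ring. eapply Rle_trans. apply gs_shift; auto. pose proof (pos_INR j); lra.
      pose proof (IHj (y - 1) ltac:(pose proof (pos_INR j); lra) n hn).
      rewrite Rpower_plus, Rpower_1 by lra. rewrite Rmult_comm.
      assert (Rpower (y - 1) (INR j) <= Rpower y (INR j)) by (apply Rle_Rpower_l; [apply pos_INR| pose proof (pos_INR j); lra]).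
      apply Rmult_le_compat. pose proof (gs_pos (y-1) n ltac:(pose proof (pos_INR j); lra) hn); lra.
      pose proof (pos_INR j); lra. lra. lra.
Qed.

Lemma gs_incr y n : 0 < y -> (1 <= n)%nat -> gs y n <= gs y (S n).
Proof. intros hy hn. assert (hN : 0 < INR n) by (apply lt_0_INR; lia).
  unfold gs. rewrite prodx_S. rewrite fact_simpl, mult_INR.
  pose proof (prodx_pos y n hy). pose proof (fact_pos' n).
  assert (E : Rpower (INR (S n)) y = Rpower (INR n) y * Rpower (1 + / INR n) y).
  { rewrite Rpower_mult_distr by (try lra; pose proof (Rinv_0_lt_compat _ hN); lra). f_equal. rewrite S_INR. field. lra. }
  assert (B : 1 + y / INR (S n) <= Rpower (1 + / INR n) y).
  { unfold Rpower. eapply Rle_trans; [|apply exp_ineq1_le]. apply Rplus_le_compat_l.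
    unfold Rdiv. apply Rmult_le_compat_l. lra. pose proof (ln_ge_1inv (1 + / INR n)).
    assert (0 < 1 + / INR n) by (pose proof (Rinv_0_lt_compat _ hN); lra).
    assert (1 - / (1 + / INR n) = / INR (S n)) by (rewrite S_INR; field; lra). rewrite <- H3. auto. }
  rewrite E. assert (0 < Rpower (INR n) y) by (unfold Rpower; apply exp_pos).
  assert (hS : 0 < INR (S n)) by (rewrite S_INR; lra).
  assert (hd : 0 < y + INR (S n)) by lra.
  unfold Rdiv. apply Rle_trans with (INR (fact n) * Rpower (INR n) y * / prodx y n * ((INR (S n) * (1 + y / INR (S n))) / (y + INR (S n)))).
  - replace ((INR (S n) * (1 + y / INR (S n))) / (y + INR (S n))) with 1 by (field; lra). lra.
  - replace (INR (S n) * INR (fact n) * (Rpower (INR n) y * Rpower (1 + / INR n) y) * / (prodx y n * (y + INR (S n))))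
      with (INR (fact n) * Rpower (INR n) y * / prodx y n * ((INR (S n) * Rpower (1 + / INR n) y) / (y + INR (S n)))) by (field; lra).
    apply Rmult_le_compat_l. apply Rmult_le_pos. apply Rmult_le_pos; lra. left; apply Rinv_0_lt_compat; lra.
    unfold Rdiv. apply Rmult_le_compat_r. left; apply Rinv_0_lt_compat; lra. apply Rmult_le_compat_l; lra.
Qed.


Lemma lim_seq_eq (u : nat -> R) (l : R) : Un_cv u l -> lim_seq u = l.
Proof. intros H. unfold lim_seq. apply (UL_sequence u). apply epsilon_spec. exists l; auto. auto. Qed.

Lemma cv_shift (u : nat -> R) (l : R) : Un_cv (fun n => u (S n)) l -> Un_cv u l.
Proof. intros H eps he. destruct (H eps he) as [N HN]. exists (S N). intros n hn.
  destruct n. lia. apply HN. lia. Qed.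

Lemma Gamma_spec (y : R) : 1 < y -> 0 < GammaR y /\ GammaR y <= Rpower y y.
Proof. intros hy.
  destruct (up_nat y ltac:(lra)) as [u [hu1 hu2]].
  assert (hu : (2 <= u)%nat).
  { assert (INR 1 < INR u) by (simpl; lra). apply INR_lt in H. lia. }
  set (j := (u - 1)%nat).
  assert (hj1 : y <= INR j + 2) by (unfold j; rewrite minus_INR by lia; simpl; lra).
  assert (hj2 : INR j <= y) by (unfold j; rewrite minus_INR by lia; simpl; lra).
  set (v := fun n => gs y (S n)).
  assert (hg : Un_growing v) by (intros n; unfold v; apply gs_incr; lia || lra).
  assert (hb : forall n, v n <= Rpower y (INR j)) by (intros n; unfold v; apply gs_bound; [lra|lia]).
  destruct (growing_cv v hg) as [l hl]. exists (Rpower y (INR j)). intros x [n ->]. apply hb.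
  assert (hGl : GammaR y = l).
  { unfold GammaR. apply lim_seq_eq. apply cv_shift. exact hl. }
  rewrite hGl. split.
  - pose proof (growing_ineq v l hg hl 0%nat). pose proof (gs_pos y 1 ltac:(lra) ltac:(lia)). unfold v in H. lra.
  - apply Rle_trans with (Rpower y (INR j)).
    + eapply Rle_cv_lim; [exact hb| exact hl|].
      intros eps he; exists 0%nat; intros; unfold R_dist; rewrite Rminus_eq_0, Rabs_R0; lra.
    + apply Rle_Rpower; lra.
Qed.

Lemma Euler_le1 : EulerGamma <= 1.
Proof.
  set (e := fun n => sumR (S n) (fun i => / INR (S i)) - ln (INR (S n))).
  assert (hd : Un_decreasing e).
  { intros n. unfold e. rewrite (sumR_S (S n)).
    assert (/ INR (S (S n)) <= ln (INR (S (S n))) - ln (INR (S n))).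
    { rewrite <- ln_div by apply INR_S_pos. pose proof (ln_ge_1inv (INR (S (S n)) / INR (S n))).
      pose proof (INR_S_pos n). pose proof (INR_S_pos (S n)).
      assert (E : 1 - / (INR (S (S n)) / INR (S n)) = / INR (S (S n))).
      { rewrite (S_INR (S n)). field. lra. }
      rewrite E in H. apply H. apply Rdiv_lt_0_compat; lra. }
    lra. }
  assert (hlb : has_lb e).
  { exists 0. intros x [n ->]. unfold e. pose proof (harm_lo 1 (le_n 1) (S n)).
    rewrite (sumR_ext _ _ (fun i => / INR (S i))) in H.
    2:{ intros i hi. destruct (Nat.leb 1 (S i)) eqn:E; auto. apply Nat.leb_gt in E; lia. }
    change (INR 1) with 1 in H. rewrite ln_1 in H.
    assert (ln (INR (S n)) <= ln (INR (S n) + 1)) by (apply lnle; [apply INR_S_pos| lra]). unfold opp_seq. lra. }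
  destruct (decreasing_cv e hd hlb) as [l hl].
  assert (EulerGamma = l) by (unfold EulerGamma; apply lim_seq_eq; exact hl).
  rewrite H. pose proof (decreasing_ineq e l hd hl 0%nat). unfold e in H0. simpl in H0.
  rewrite ln_1 in H0. lra.
Qed.


Lemma tail_bound (s l1 A B : R) : 0 < s -> 0 <= l1 -> 0 < A -> 0 < B ->
  (l1 < A / B -> s <= exp (A / B)) -> A * s - B * s * l1 <= A * exp (A / B).
Proof. intros hs hl hA hB H. destruct (Rle_lt_dec (A / B) l1).
  - assert (A <= B * l1). { apply Rmult_le_reg_r with (/ B). apply Rinv_0_lt_compat; lra.
      replace (B * l1 * / B) with l1 by (field; lra). auto. }
    assert (A * s <= B * l1 * s) by (apply Rmult_le_compat_r; lra).
    assert (0 <= A * exp (A / B)) by (apply Rmult_le_pos; [lra| left; apply exp_pos]). lra.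
  - specialize (H r). assert (A * s <= A * exp (A / B)) by (apply Rmult_le_compat_l; lra).
    assert (0 <= B * s * l1) by (repeat apply Rmult_le_pos; lra). lra.
Qed.

Lemma lnlt_exp (s M : R) : 0 < s -> ln (1 + s) < M -> s <= exp M.
Proof. intros hs h. assert (1 + s < exp M). { rewrite <- (exp_ln (1 + s)) by lra. apply exp_increasing; auto. } lra. Qed.


Theorem mainTheorem13 (r : nat -> R) (a : R)
  (ha : 0 < a)
  (hrpos : forall n : nat, (1 <= n)%nat -> 0 < r n)
  (hrasym : Un_cv (fun n => INR n * r n) a) :
  exists C c : R, 0 < C /\ 0 < c < 1 /\
    (forall eps : R, 0 < eps ->
       exists Neps : nat, forall N k m : nat,
         (Neps <= N)%nat -> (1 <= k)%nat -> (1 <= m <= N)%nat ->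
         let s := INR k / ln (INR N) in
         let t := INR m / INR N in
         probTau r N k m <=
           C * / INR N * (s / t) * Rpower t ((1 - eps) * s)
             * exp (- c * s * logp (c * s))) /\
    (exists C' : R, 0 < C' /\
       exists N0 : nat, forall N k m : nat,
         (N0 <= N)%nat -> (1 <= k)%nat -> (1 <= m <= N)%nat ->
         let s := INR k / ln (INR N) in
         let t := INR m / INR N in
         probTau r N k m <= C' * / INR N * dickman_f01 (c * s) t).
Proof.
  destruct (core r a ha hrpos hrasym) as [K1 [hK1 HC]].
  set (K0 := 4 + 3 * exp (3 / (1/2))).
  exists (K1 * exp K0), (1/4). split. apply Rmult_lt_0_compat; auto; apply exp_pos.
  split. lra. split.
  - intros eps heps. set (e := Rmin eps (1/2)).
    assert (he : 0 < e <= 1/2) by (unfold e; split; [apply Rmin_glb_lt|apply Rmin_r]; lra).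
    assert (hee : e <= eps) by (unfold e; apply Rmin_l).
    destruct (HC e he) as [Ne HNe]. exists (Nat.max Ne 3). intros N k m hN hk hm s t.
    pose proof (HNe N k m ltac:(lia) hk hm) as B. fold s t in B.
    assert (hN3 : 3 <= INR N) by (replace 3 with (INR 3) by (simpl; lra); apply le_INR; lia).
    assert (hL : 1 <= ln (INR N)) by (apply ln_ge1; auto).
    assert (hmpos : 1 <= INR m) by (replace 1 with (INR 1) by reflexivity; apply le_INR; lia).
    assert (hmN : INR m <= INR N) by (apply le_INR; lia).
    assert (hkpos : 1 <= INR k) by (replace 1 with (INR 1) by reflexivity; apply le_INR; lia).
    assert (hs : 0 < s) by (unfold s; apply Rdiv_lt_0_compat; lra).
    assert (ht : 0 < t) by (unfold t; apply Rdiv_lt_0_compat; lra).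
    assert (hlt : ln t <= 0) by (rewrite <- ln_1; apply lnle; auto; unfold t; apply div_le; lra).
    assert (hl1 : 0 <= ln (1 + s)) by (apply ln1p_ge0; lra).
    assert (hlogp : logp (1/4 * s) <= ln (1 + s)).
    { unfold logp. apply Rmax_lub; auto. apply lnle. lra. lra. }
    eapply Rle_trans. apply B.
    unfold Rpower. 
    replace (K1 * exp K0 * / INR N * (s / t) * exp ((1 - eps) * s * ln t) * exp (- (1 / 4) * s * logp (1 / 4 * s)))
      with (K1 * (s / t * / INR N) * exp (K0 + (1 - eps) * s * ln t + - (1 / 4) * s * logp (1 / 4 * s)))
      by (rewrite !exp_plus; ring).
    apply Rmult_le_compat_l. apply Rmult_le_pos. lra. apply Rmult_le_pos. left; apply Rdiv_lt_0_compat; lra.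
    left; apply Rinv_0_lt_compat; lra.
    apply exple. unfold Phi, K0.
    assert (T1 : 3 * s - 1/2 * s * ln (1 + s) <= 3 * exp (3 / (1/2))).
    { apply tail_bound; try lra. intros; apply lnlt_exp; auto. }
    assert (T2 : (1 - e / 2) * s * ln t <= (1 - eps) * s * ln t).
    { assert (0 <= (eps - e / 2) * s * (- ln t)) by (apply Rmult_le_pos; [apply Rmult_le_pos|]; lra).
      assert ((1 - eps) * s * ln t - (1 - e / 2) * s * ln t = (eps - e / 2) * s * (- ln t)) by ring. lra. }
    assert (T3 : 3 / 4 * s * ln (1 + s) <= (1 - e / 2) * s * ln (1 + s)).
    { apply Rmult_le_compat_r; auto. apply Rmult_le_compat_r; lra. }
    assert (T4 : 1 / 4 * s * logp (1 / 4 * s) <= 1 / 4 * s * ln (1 + s)).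
    { apply Rmult_le_compat_l; auto. lra. }
    lra.
  - set (W := 4 + 17/4 * exp (17/4 / (1/2))).
    exists (4 * K1 * exp W). split. apply Rmult_lt_0_compat; [lra| apply exp_pos].
    destruct (HC (1/2) ltac:(lra)) as [N0 HN0]. exists (Nat.max N0 3). intros N k m hN hk hm s t.
    pose proof (HN0 N k m ltac:(lia) hk hm) as B. fold s t in B.
    assert (hN3 : 3 <= INR N) by (replace 3 with (INR 3) by (simpl; lra); apply le_INR; lia).
    assert (hL : 1 <= ln (INR N)) by (apply ln_ge1; auto).
    assert (hmpos : 1 <= INR m) by (replace 1 with (INR 1) by reflexivity; apply le_INR; lia).
    assert (hmN : INR m <= INR N) by (apply le_INR; lia).
    assert (hkpos : 1 <= INR k) by (replace 1 with (INR 1) by reflexivity; apply le_INR; lia).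
    assert (hs : 0 < s) by (unfold s; apply Rdiv_lt_0_compat; lra).
    assert (ht : 0 < t) by (unfold t; apply Rdiv_lt_0_compat; lra).
    assert (hlt : ln t <= 0) by (rewrite <- ln_1; apply lnle; auto; unfold t; apply div_le; lra).
    assert (hl1 : 0 <= ln (1 + s)) by (apply ln1p_ge0; lra).
    assert (hl1s : ln (1 + s) <= s) by (apply ln1p_le; lra).
    set (x := 1 / 4 * s).
    assert (hx : 0 < x) by (unfold x; lra).
    destruct (Gamma_spec (x + 1) ltac:(lra)) as [hG1 hG2].
    set (G := GammaR (x + 1)) in *.
    pose proof Euler_le1 as hgam.
    assert (hlx : 0 <= ln (x + 1) <= ln (1 + s)).
    { split. rewrite Rplus_comm; apply ln1p_ge0; lra. apply lnle; unfold x; lra. }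
    eapply Rle_trans. apply B.
    unfold dickman_f01. fold x. fold G. unfold Rpower at 1.
    assert (Et : exp ((x - 1) * ln t) = exp (x * ln t) * / t).
    { replace ((x - 1) * ln t) with (x * ln t + - ln t) by ring. rewrite exp_plus, exp_Ropp, exp_ln; auto. }
    rewrite Et.
    replace (4 * K1 * exp W * / INR N * (x * (exp (x * ln t) * / t) * exp (- EulerGamma * x) / G))
      with (K1 * (s / t * / INR N) * (exp (W + x * ln t + - EulerGamma * x) / G))
      by (rewrite !exp_plus; unfold x; field; repeat split; lra).
    apply Rmult_le_compat_l. apply Rmult_le_pos. lra. apply Rmult_le_pos. left; apply Rdiv_lt_0_compat; lra.
    left; apply Rinv_0_lt_compat; lra.
    apply le_div; auto.
    apply Rle_trans with (exp (Phi (1/2) s t) * exp ((x + 1) * ln (x + 1))).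
    { apply Rmult_le_compat_l. left; apply exp_pos. apply hG2. }
    rewrite <- exp_plus. apply exple. unfold Phi, W.
    assert (T1 : 17/4 * s - 1/2 * s * ln (1 + s) <= 17/4 * exp (17/4 / (1/2))).
    { apply tail_bound; try lra. intros; apply lnlt_exp; auto. }
    assert (T2 : (x + 1) * ln (x + 1) <= (x + 1) * ln (1 + s)) by (apply Rmult_le_compat_l; lra).
    assert (T3 : EulerGamma * x >= x * 1 - x * (1 - EulerGamma)) by lra.
    assert (T3' : 0 <= x * (1 - EulerGamma)) by (apply Rmult_le_pos; lra).
    assert (T4 : 0 <= s * (- ln t)) by (apply Rmult_le_pos; lra).
    assert (E1 : (x + 1) * ln (1 + s) = 1/4 * (s * ln (1 + s)) + ln (1 + s)) by (unfold x; ring).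
    assert (E2 : x * ln t = 1/4 * (s * ln t)) by (unfold x; ring).
    assert (E3 : (1 - 1 / 2 / 2) * s * ln t = 3/4 * (s * ln t)) by field.
    assert (E4 : (1 - 1 / 2 / 2) * s * ln (1 + s) = 3/4 * (s * ln (1 + s))) by field.
    assert (E5 : 1/2 * s * ln (1 + s) = 1/2 * (s * ln (1 + s))) by ring.
    assert (E6 : x = 1/4 * s) by reflexivity.
    lra.
Qed.
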